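(* Let $\mathcal T$ be a locally finite partial tessellation of ${\mathbb X}$, let $H$ be a hyperplane of ${\mathbb X}$ and let $Z$ be a closed half-space bounded by $H$. Then $$\mathcal T_Z=\{T\cap H: T\in\mathcal T \text{ and } Z \text{ is an essential closed half-space of } T\}$$ is a locally finite partial tessellation of $H$.
   Context: ${\mathbb X}$ is $\mathbb R^n$, the unit sphere $\mathbb S^n$, or hyperbolic $n$-space; a hyperplane is a complete totally geodesic submanifold of codimension 1, itself a space of the same type of dimension $n-1$. Closed half-spaces are closures of the two components of the complement of a hyperplane. A polyhedron (of ${\mathbb X}$ or of $H$) is a nonempty intersection of a family of closed half-spaces whose boundary hyperplanes form a locally finite family; it is thick if it has nonempty interior in the ambient space. For a thick polyhedron $T$, a closed half-space $Z$ is essential if $T\subseteq Z$ and $T\cap\partial Z$ has nonempty interior in $\partial Z$. A partial tessellation is a set of thick polyhedra (tiles) with pairwise disjoint interiors; locally finite means every compact set meets only finitely many tiles. *)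

(* Defs.v *)
From HB Require Import structures.
From mathcomp Require Import all_boot all_order all_algebra.
From mathcomp Require Import all_classical all_reals all_analysis.
Set Implicit Arguments. Unset Strict Implicit. Unset Printing Implicit Defensive.
Import Order.TTheory GRing.Theory Num.Theory.
Import numFieldNormedType.Exports.
Local Open Scope classical_set_scope.
Local Open Scope ring_scope.

(* The three model geometries, realised inside V = 'rV[R]_(n.+1):
   - Euclid     : the affine chart { x | x_0 = 1 }  (= R^n)
   - Sphere     : the unit sphere { x | sum x_i^2 = 1 }  (= S^n)
   - Hyperbolic : the upper sheet of the hyperboloid
                  { x | x_0 > 0, -x_0^2 + sum_{i>0} x_i^2 = -1 }  (= H^n).
   All topological notions are those of the subspace topology from V. *)
Inductive geom := Euclid | Sphere | Hyperbolic.

Section Defs.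
Variables (R : realType) (n : nat).
Local Notation V := 'rV[R]_n.+1.

Definition lf (b x : V) : R := \sum_(i < n.+1) b 0 i * x 0 i.

Definition model_space (g : geom) : set V :=
  match g with
  | Euclid => [set x | x 0 ord0 = 1]
  | Sphere => [set x | \sum_(i < n.+1) x 0 i ^+ 2 = 1]
  | Hyperbolic => [set x | 0 < x 0 ord0 /\
        - (x 0 ord0 ^+ 2) + \sum_(i < n.+1 | i != ord0) x 0 i ^+ 2 = -1]
  end.

(* M is a model space (X itself or a hyperplane of X, i.e. X cut by a linear
   subspace).  Its hyperplanes are its intersections with linear hyperplanes
   ker b which do not contain M; H is the boundary of the closed half-space Z
   (of M) when both are cut out by the same functional b. *)
Definition bounded_halfspace (M H Z : set V) : Prop :=
  exists b : V, H = M `&` [set x | lf b x = 0] /\ H <> M /\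
                Z = M `&` [set x | 0 <= lf b x].

Definition hyperplane_in (M H : set V) : Prop :=
  exists Z, bounded_halfspace M H Z.

Definition halfspace_in (M Z : set V) : Prop :=
  exists H, bounded_halfspace M H Z.

Definition relint (M S : set V) : set V :=
  [set x | M x /\ S x /\ exists U : set V, nbhs x U /\ U `&` M `<=` S].

Definition locally_finite_in (M : set V) (F : set (set V)) : Prop :=
  forall x, M x -> exists U : set V, nbhs x U /\
    finite_set [set A | F A /\ A `&` U !=set0].

Definition polyhedron_in (M P : set V) : Prop :=
  exists F : set (set V * set V),
    (forall HZ, F HZ -> bounded_halfspace M HZ.1 HZ.2) /\
    locally_finite_in M [set H | exists Z, F (H, Z)] /\
    P = M `&` \bigcap_(HZ in F) HZ.2 /\
    P !=set0.

Definition thick_in (M P : set V) : Prop := relint M P !=set0.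

Definition essential (M T Z : set V) : Prop :=
  T `<=` Z /\ exists H, bounded_halfspace M H Z /\ relint H (T `&` H) !=set0.

Definition partial_tessellation_in (M : set V) (Tt : set (set V)) : Prop :=
  (forall T, Tt T -> polyhedron_in M T /\ thick_in M T) /\
  (forall T T', Tt T -> Tt T' -> T <> T' ->
     relint M T `&` relint M T' = set0).

Definition locally_finite_tess_in (M : set V) (Tt : set (set V)) : Prop :=
  partial_tessellation_in M Tt /\
  forall K, K `<=` M -> compact K -> finite_set [set T | Tt T /\ T `&` K !=set0].

End Defs.

(* Main.v *)
Require Import Defs.
From HB Require Import structures.
From mathcomp Require Import all_boot all_order all_algebra.
From mathcomp Require Import all_classical all_reals all_analysis.
Set Implicit Arguments. Unset Strict Implicit. Unset Printing Implicit Defensive.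
Import Order.TTheory GRing.Theory Num.Theory.
Import numFieldNormedType.Exports.
From mathcomp Require Import lra.
Local Open Scope classical_set_scope.
Local Open Scope ring_scope.

Section S.
Variables (R : realType) (n : nat).
Local Notation V := 'rV[R]_n.+1.

Lemma lfD (b x y : V) : lf b (x + y) = lf b x + lf b y.
Proof. by rewrite /lf -big_split /=; apply: eq_bigr => i _; rewrite mxE mulrDr. Qed.

Lemma lfZ (b x : V) (t : R) : lf b (t *: x) = t * lf b x.
Proof. by rewrite /lf mulr_sumr; apply: eq_bigr => i _; rewrite mxE mulrCA. Qed.

Lemma lfN (b x : V) : lf b (- x) = - lf b x.
Proof. by rewrite -scaleN1r lfZ mulN1r. Qed.

Lemma lfB (b x y : V) : lf b (x - y) = lf b x - lf b y.
Proof. by rewrite lfD lfN. Qed.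

Lemma lf_cont (b : V) : continuous (lf b).
Proof.
move=> x; rewrite /lf.
apply: cvg_big.
- exact: add_continuous.
- exact: nbhs_filter.
- move=> i _; apply: cvgMr; last exact: coord_continuous.
  exact: nbhs_filter.
Qed.


Lemma lf_self (b : V) : lf b b = \sum_(i < n.+1) b 0 i ^+ 2.
Proof. by apply: eq_bigr => i _; rewrite expr2. Qed.

Lemma lf0 (x : V) : lf 0 x = 0.
Proof. by rewrite /lf big1 // => i _; rewrite mxE mul0r. Qed.

Lemma lf_self_eq0 (b : V) : lf b b = 0 -> b = 0.
Proof.
rewrite lf_self => /psumr_eq0P h; apply/rowP => i; rewrite mxE.
by apply/eqP; rewrite -sqrf_eq0; apply/eqP; apply: h => // j _; rewrite sqr_ge0.
Qed.

Lemma exists_pos_near0 (A : set R) : nbhs (0:R) A -> exists2 e, 0 < e & A e.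
Proof.
move=> /nbhs_ballP [r r0 hr]; exists (r / 2); first by rewrite divr_gt0.
apply: hr; rewrite /ball /= sub0r normrN gtr0_norm ?divr_gt0 //.
by rewrite ltr_pdivrMr // ltr_pMr // ltr1n.
Qed.

Lemma lf_min0 (b y : V) : nbhs y [set p | 0 <= lf b p] -> lf b y = 0 -> b = 0.
Proof.
move=> hn hy.
have cv : (fun e : R => y - e *: b) @ nbhs (0:R) --> y.
  rewrite -[X in _ --> X]subr0 -[X in _ - X](scale0r b).
  apply: cvgB; first exact: cvg_cst.
  by apply: cvgZl; exact: cvg_id.
have [e e0 he] := exists_pos_near0 (cv _ hn).
move: he; rewrite /= lfB lfZ hy sub0r oppr_ge0 pmulr_rle0 // => hb.
apply: lf_self_eq0; apply/eqP; rewrite eq_le hb lf_self sumr_ge0 // => i _.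
exact: sqr_ge0.
Qed.


Definition CP (M : set V) := forall m, M m -> forall U, nbhs m U ->
  nbhs m [set p | exists t y, 0 < t /\ M y /\ U y /\ p = t *: y].

Lemma CP_gen (M : set V) m (phi : V -> R) :
  M m -> {for m, continuous phi} -> phi m = 1 ->
  nbhs m (fun p => 0 < phi p -> M ((phi p)^-1 *: p)) ->
  forall U, nbhs m U ->
  nbhs m [set p | exists t y, 0 < t /\ M y /\ U y /\ p = t *: y].
Proof.
move=> Mm cphi phi1 hM U hU.
have cv : (fun p => (phi p)^-1 *: p) @ nbhs m --> m.
  rewrite -[X in _ --> X]scale1r -[X in X *: _]invr1 -[X in X^-1 *: _]phi1.
  apply: cvgZ; last exact: cvg_id.
  by apply: cvgV; [rewrite phi1 oner_neq0 | exact: cphi].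
have hpos : nbhs m (fun p => 0 < phi p).
  have : nbhs (phi m) [set r : R | 0 < r].
    apply: open_nbhs_nbhs; split; [exact: open_gt | ]. rewrite phi1 /=. exact: ltr01.
  exact: cphi.
have h3 : nbhs m [set p | U ((phi p)^-1 *: p)] by exact: cv.
have hI : nbhs m ((fun p => 0 < phi p -> M ((phi p)^-1 *: p)) `&` ((fun p => 0 < phi p) `&` [set p | U ((phi p)^-1 *: p)])).
  by apply: filterI => //; apply: filterI.
apply: filterS hI => p [h1 [h2 h4]].
exists (phi p), ((phi p)^-1 *: p); split => //; split; first exact: h1.
split => //; rewrite scalerA mulfV ?scale1r //; exact: lt0r_neq0.
Qed.

Lemma sq_sum_cont (P : pred 'I_n.+1) :
  continuous (fun p : V => \sum_(i < n.+1 | P i) p 0 i ^+ 2).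
Proof.
move=> x; apply: cvg_big.
- exact: add_continuous.
- exact: nbhs_filter.
- move=> i _; under eq_cvg do rewrite expr2.
  rewrite expr2; apply: cvgM; try exact: nbhs_filter; exact: coord_continuous.
Qed.


Lemma sq_coord_cont i : continuous (fun p : V => p 0 i ^+ 2).
Proof.
move=> x; rewrite /continuous_at expr2; under eq_cvg do rewrite expr2.
apply: cvgM; try exact: nbhs_filter; exact: coord_continuous.
Qed.

Lemma CP_euclid : CP (@model_space R n Euclid).
Proof.
move=> m Mm; apply: (CP_gen (phi := fun p : V => p 0 ord0)) => //.
- exact: coord_continuous.
- apply: filterE => p p0; rewrite /model_space /= mxE mulVf //; exact: lt0r_neq0.
Qed.

Lemma CP_sphere : CP (@model_space R n Sphere).
Proof.
move=> m Mm; apply: (CP_gen (phi := fun p : V => Num.sqrt (\sum_(i < n.+1) p 0 i ^+ 2))) => //.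
- apply: continuous_comp; first exact: sq_sum_cont.
  exact: sqrt_continuous.
- by rewrite Mm sqrtr1.
- apply: filterE => p p0; rewrite /model_space /=.
  have s0 : 0 <= \sum_(i < n.+1) p 0 i ^+ 2 by apply: sumr_ge0 => i _; exact: sqr_ge0.
  under eq_bigr do rewrite mxE exprMn.
  rewrite -mulr_sumr exprVn sqr_sqrtr // mulVf //.
  by move: p0; rewrite sqrtr_gt0 => /lt0r_neq0.
Qed.

Lemma CP_hyper : CP (@model_space R n Hyperbolic).
Proof.
move=> m Mm; have [m0 mE] := Mm.
apply: (CP_gen (phi := fun p : V => Num.sqrt (p 0 ord0 ^+ 2 - \sum_(i < n.+1 | i != ord0) p 0 i ^+ 2))) => //.
- apply: continuous_comp; last exact: sqrt_continuous.
  apply: cvgB; last exact: sq_sum_cont; first exact: nbhs_filter.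
  exact: sq_coord_cont.
- set a := (_ - _); have -> : a = 1 by rewrite /a; lra.
  exact: sqrtr1.
- have hp : nbhs m (fun p : V => 0 < p 0 ord0).
    have : nbhs (m 0 ord0) [set r : R | 0 < r].
      by apply: open_nbhs_nbhs; split; [exact: open_gt | ].
    exact: coord_continuous.
  apply: filterS hp => p p0 ph; rewrite /model_space /=.
  move: ph; set a := _ - _ => ph.
  have a0 : 0 < a by rewrite -sqrtr_gt0.
  split; first by rewrite mxE mulr_gt0 // invr_gt0.
  under eq_bigr do rewrite mxE exprMn.
  rewrite mxE exprMn -mulr_sumr exprVn sqr_sqrtr ?ltW //.
  have -> : \sum_(i < n.+1 | i != ord0) p 0 i ^+ 2 = p 0 ord0 ^+ 2 - a.
    by rewrite /a; lra.
  rewrite -mulrN -mulrDr; have -> : - p 0 ord0 ^+ 2 + (p 0 ord0 ^+ 2 - a) = - a by lra.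
  by rewrite mulrN mulVf // gt_eqF.
Qed.

Lemma CP_model g : CP (@model_space R n g).
Proof. case: g; [exact: CP_euclid | exact: CP_sphere | exact: CP_hyper]. Qed.

Definition cone_for (M T C : set V) :=
  [/\ (forall p q, C p -> C q -> C (p + q)),
      (forall t p, 0 <= t -> C p -> C (t *: p)),
      T `<=` C &
      (forall y, M y -> C y -> T y)].

Lemma polyhedron_cone (M T : set V) : polyhedron_in M T -> exists C, cone_for M T C.
Proof.
move=> [F [hF [_ [TE _]]]].
exists [set p | forall HZ c, F HZ -> HZ.2 = M `&` [set x | 0 <= lf c x] -> 0 <= lf c p].
split.
- move=> p q hp hq HZ c hHZ e; rewrite lfD; apply: addr_ge0; [exact: (hp _ _ hHZ e) | exact: (hq _ _ hHZ e)].
- move=> t p t0 hp HZ c hHZ e; rewrite lfZ; apply: mulr_ge0 => //; exact: (hp _ _ hHZ e).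
- move=> y; rewrite TE => -[My hy] HZ c hHZ e.
  by have := hy HZ hHZ; rewrite e => -[].
- move=> y My hy; rewrite TE; split => // HZ hHZ.
  have [H1 [c [_ [_ e2]]]] : halfspace_in M HZ.2.
    by have := hF HZ hHZ; exists HZ.1.
  rewrite e2; split => //; exact: (hy _ _ hHZ e2).
Qed.

Lemma cone_nbhs (M Q U : set V) m : CP M -> M m -> nbhs m U ->
  (forall y, M y -> U y -> Q y) -> (forall t p, 0 < t -> Q p -> Q (t *: p)) ->
  nbhs m Q.
Proof.
move=> cp Mm hU hUQ hQ; apply: filterS (cp m Mm U hU) => p [t [y [t0 [My [Uy ->]]]]].
by apply: hQ => //; exact: hUQ.
Qed.

Lemma lf_cont_at (b : V) (F : set_system V) {FF : Filter F} (f : V -> V) l :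
  f @ F --> l -> lf b (f x) @[x --> F] --> lf b l.
Proof. by move=> h; apply: continuous_cvg => //; exact: lf_cont. Qed.

Lemma b_neq0 (M H : set V) b : H = M `&` [set x | lf b x = 0] -> H <> M -> b <> 0.
Proof.
move=> HE HM b0; apply: HM; rewrite HE b0; apply/seteqP; split => x //=.
  by case.
by move=> Mx; split => //; rewrite lf0.
Qed.

Lemma lf_gt0_nbhs (b y : V) : 0 < lf b y -> nbhs y [set p | 0 < lf b p].
Proof.
move=> h; have : nbhs (lf b y) [set r : R | 0 < r].
  by apply: open_nbhs_nbhs; split; [exact: open_gt | ].
exact: lf_cont.
Qed.

Lemma bdry_sub (M H H0 Z : set V) : CP M -> bounded_halfspace M H Z ->
  bounded_halfspace M H0 Z -> H `<=` H0.
Proof.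
move=> cp [b [HE [HM ZE]]] [b0 [H0E [H0M Z0E]]] y.
rewrite HE H0E => -[My hb]; split => //.
have Zy : Z y by rewrite ZE; split => //=; rewrite hb.
move: Zy; rewrite Z0E => -[_ /= hb0].
case: (ltgtP (lf b0 y) 0) => // [|h]; first by rewrite ltNge hb0.
exfalso; apply: (b_neq0 HE HM).
apply: (lf_min0 (y := y)) => //.
apply: (cone_nbhs (M := M) (U := [set p | 0 < lf b0 p])) => //.
- exact: lf_gt0_nbhs.
- move=> y' My' hy'; have : Z y' by rewrite Z0E; split => //=; exact: ltW.
  by rewrite ZE => -[].
- by move=> t p t0 /= hp; rewrite lfZ mulr_ge0 // ltW.
Qed.

Lemma bdry_eq (M H H0 Z : set V) : CP M -> bounded_halfspace M H Z ->
  bounded_halfspace M H0 Z -> H = H0.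
Proof.
move=> cp h1 h2; apply/seteqP; split; [exact: (bdry_sub cp h1 h2) | exact: (bdry_sub cp h2 h1)].
Qed.

Lemma open_nbhs_of (A : set V) q : open A -> A q -> nbhs q A.
Proof. by move=> oA Aq; apply: open_nbhs_nbhs; split. Qed.

Lemma z_pos (M H Z T C : set V) b z : CP M ->
  H = M `&` [set x | lf b x = 0] -> H <> M -> Z = M `&` [set x | 0 <= lf b x] ->
  cone_for M T C -> T `<=` Z -> relint M T z -> 0 < lf b z /\ nbhs z C.
Proof.
move=> cp HE HM ZE [cD cZ TC CT] TZ [Mz [Tz [U [hU hUT]]]].
split; last first.
  apply: (cone_nbhs (M := M) (U := U)) => //.
  - by move=> y My Uy; apply: TC; apply: hUT.
  - by move=> t p t0; apply: cZ; exact: ltW.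
have : 0 <= lf b z by have := TZ _ Tz; rewrite ZE => -[].
rewrite le_eqVlt => /orP [/eqP h|//]; exfalso.
apply: (b_neq0 HE HM); apply: (lf_min0 (y := z)) => //.
apply: (cone_nbhs (M := M) (U := U)) => //.
- by move=> y My Uy; have := TZ _ (hUT _ (conj Uy My)); rewrite ZE => -[].
- by move=> t p t0 /= hp; rewrite lfZ mulr_ge0 // ltW.
Qed.

Lemma x_near (M H T C : set V) b x : CP M ->
  H = M `&` [set x | lf b x = 0] -> cone_for M T C -> relint H (T `&` H) x ->
  [/\ M x, lf b x = 0 & nbhs x [set p | lf b p = 0 -> C p]].
Proof.
move=> cp HE [cD cZ TC CT] [Hx [_ [U [hU hUT]]]].
have [Mx bx] : M x /\ lf b x = 0 by move: Hx; rewrite HE.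
split => //.
apply: filterS (cp x Mx U hU) => p [t [y [t0 [My [Uy ->]]]]].
rewrite /= lfZ => /eqP; rewrite mulf_eq0 (gt_eqF t0) /= => /eqP hy.
apply: cZ; first exact: ltW.
have : (T `&` H) y by apply: hUT; split => //; rewrite HE.
by case => /TC.
Qed.

Lemma g_cont (b z p : V) :
  (fun q => q - (lf b q / lf b z) *: z) @ nbhs p --> p - (lf b p / lf b z) *: z.
Proof.
apply: cvgB; first exact: cvg_id.
apply: cvgZ; last exact: cvg_cst.
apply: cvgM; last exact: cvg_cst.
exact: lf_cont.
Qed.

Lemma decomp_nbhs (M T C : set V) b z p : cone_for M T C -> C z -> 0 < lf b z ->
  0 < lf b p -> nbhs (p - (lf b p / lf b z) *: z) [set q | lf b q = 0 -> C q] ->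
  nbhs p C.
Proof.
move=> [cD cZ TC CT] Cz bz bp hG.
have h1 := g_cont hG.
have h2 := lf_gt0_nbhs bp.
have hI : nbhs p ([set q | lf b q > 0] `&` [set q | lf b (q - (lf b q / lf b z) *: z) = 0 -> C (q - (lf b q / lf b z) *: z)]).
  by apply: filterI.
apply: filterS hI => q [/= bq hq].
have -> : q = (q - (lf b q / lf b z) *: z) + (lf b q / lf b z) *: z by rewrite subrK.
apply: cD; last by apply: cZ => //; rewrite divr_ge0 // ltW.
apply: hq; rewrite lfB lfZ mulfVK //; first by rewrite subrr.
exact: lt0r_neq0.
Qed.

Lemma core (M H Z T T' C C' : set V) b x z z' : CP M ->
  H = M `&` [set x | lf b x = 0] -> H <> M -> Z = M `&` [set x | 0 <= lf b x] ->
  cone_for M T C -> cone_for M T' C' -> T `<=` Z -> T' `<=` Z ->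
  relint M T z -> relint M T' z' -> relint H (T `&` H) x -> relint H (T' `&` H) x ->
  exists q, relint M T q /\ relint M T' q.
Proof.
move=> cp HE HM ZE cT cT' TZ T'Z rz rz' rx rx'.
have [bz hzC] := z_pos cp HE HM ZE cT TZ rz.
have [bz' hzC'] := z_pos cp HE HM ZE cT' T'Z rz'.
have [Mx bx hG] := x_near cp HE cT rx.
have [_ _ hG'] := x_near cp HE cT' rx'.
have Cz : C z by case: cT => _ _ TC _; apply: TC; case: rz => _ [].
have Cz' : C' z' by case: cT' => _ _ TC _; apply: TC; case: rz' => _ [].
have hW := cp x Mx setT (@filterT _ _ (nbhs_filter x)).
set al := lf b z / lf b z'.
set G' := [set p | lf b p = 0 -> C' p].
have hG'i : nbhs x G'° by exact: nbhs_interior.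
have c1 : (fun s : R => x + s *: z - (s * al) *: z') @ nbhs (0:R) --> x + (0:R) *: z - ((0:R) * al) *: z'.
  apply: cvgB; first (apply: cvgD; first exact: cvg_cst).
  - apply: cvgZ; [exact: cvg_id | exact: cvg_cst].
  - apply: cvgZ; last exact: cvg_cst.
    apply: cvgM; [exact: cvg_id | exact: cvg_cst].
have c2 : (fun s : R => x + s *: z) @ nbhs (0:R) --> x + (0:R) *: z.
  apply: cvgD; first exact: cvg_cst.
  apply: cvgZ; [exact: cvg_id | exact: cvg_cst].
rewrite mul0r !scale0r addr0 subr0 in c1 c2.
have hs : nbhs (0:R) ([set s | G'° (x + s *: z - (s * al) *: z')] `&`
    [set s | exists t y, 0 < t /\ M y /\ setT y /\ x + s *: z = t *: y]).
  have a1 := c1 _ hG'i; have a2 := c2 _ hW; by apply: filterI.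
have [s s0 [hs1 [t [y [t0 [My [_ pE]]]]]]] := exists_pos_near0 hs.
set p := x + s *: z in pE.
have bp : lf b p = s * lf b z by rewrite /p lfD bx add0r lfZ.
have bp0 : 0 < lf b p by rewrite bp mulr_gt0.
have hpC : nbhs p C.
  apply: (decomp_nbhs cT Cz bz bp0).
  by rewrite bp mulfK ?(gt_eqF bz) // /p addrK.
have hpC' : nbhs p C'.
  apply: (decomp_nbhs cT' Cz' bz' bp0).
  rewrite bp -mulrA -/al /p.
  apply: filterS (open_nbhs_of (@open_interior _ G') hs1).
  exact: interior_subset.
have hpCC : nbhs p (C `&` C') by apply: filterI.
have cy : (fun y' : V => t *: y') @ nbhs y --> p.
  rewrite pE; apply: cvgZ; [exact: cvg_cst | exact: cvg_id].
have hU := cy _ hpCC.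
have yE : y = t^-1 *: p by rewrite pE scalerA mulVf ?scale1r // gt_eqF.
have key : forall (TT CC : set V), cone_for M TT CC -> nbhs p CC -> relint M TT y.
  move=> TT CC [cD cZ TC CT] hp.
  have hU2 : nbhs y [set y' | CC (t *: y')] by exact: cy.
  split => //; split.
    apply: CT => //; rewrite yE; apply: cZ; first by rewrite invr_ge0 ltW.
    exact: nbhs_singleton hp.
  exists [set y' | CC (t *: y')]; split => // y' [hy' My'].
  apply: CT => //; rewrite -[y'](scale1r) -(mulVf (lt0r_neq0 t0)) -scalerA.
  by apply: cZ => //; rewrite invr_ge0 ltW.
by exists y; split; [exact: (key _ _ cT hpC) | exact: (key _ _ cT' hpC')].
Qed.

Lemma poly_restrict (M H T : set V) : H `<=` M -> polyhedron_in M T ->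
  (T `&` H) !=set0 -> polyhedron_in H (T `&` H).
Proof.
move=> HM [F [hF [hlf [TE _]]]] ne.
exists [set HZ' | exists HZ, F HZ /\ HZ'.1 = H `&` HZ.1 /\ HZ'.2 = H `&` HZ.2 /\ HZ'.1 <> H].
split; [|split; [|split]] => //.
- move=> [A' Z'] [[A Z0] [FHZ [/= e1 [e2 ne1]]]].
  have [c [e3 [_ e4]]] := hF _ FHZ; rewrite /= in e3 e4.
  exists c; rewrite /= e1 e2 /= e3 e4 !setIA (setIidl HM); split => //; split => //.
  by move=> h; apply: ne1; rewrite e1 e3 setIA (setIidl HM).
- move=> x Hx; have [U [hU fin]] := hlf x (HM x Hx).
  exists U; split => //.
  apply: sub_finite_set (finite_image (fun A => H `&` A) fin).
  move=> A' [[Z' [[A Z0] [FHZ [/= e1 [e2 ne1]]]]] [y [Ay Uy]]].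
  exists A; last by rewrite e1.
  split; first by exists Z0.
  by exists y; split => //; move: Ay; rewrite e1 => -[].
- rewrite TE; apply/seteqP; split => y.
    move=> [[My hy] Hy]; split => // -[A' Z'] [[A Z0] [FHZ [/= e1 [e2 ne1]]]].
    by rewrite e2; split => //; exact: (hy _ FHZ).
  move=> [Hy hy]; split => //; split; first exact: HM.
  move=> [A Z0] FHZ /=.
  have [c [e3 [_ e4]]] := hF _ FHZ; rewrite /= in e3 e4.
  have [eqH|neqH] := pselect (H `&` A = H).
    have : A y by rewrite -eqH in Hy; case: Hy.
    by rewrite /= e3 e4 => -[My /= ->].
  have := hy (H `&` A, H `&` Z0); rewrite /=.
  by case => //; exists (A, Z0).
Qed.

End S.

Unset Implicit Arguments.

Theorem lemma4p5 (R : realType) (g : geom) (n : nat)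
    (Tt : set (set 'rV[R]_n.+1)) (H Z : set 'rV[R]_n.+1) :
  locally_finite_tess_in (@model_space R n g) Tt ->
  bounded_halfspace (@model_space R n g) H Z ->
  locally_finite_tess_in H
    [set S | exists T, Tt T /\ essential (@model_space R n g) T Z /\ S = T `&` H].
Proof.
set M := @model_space R n g.
have cp : CP M := @CP_model R n g.
move=> [[hTt hdisj] hfin] hb.
have [b [HE [HM ZE]]] := hb.
have HsubM : H `<=` M by rewrite HE => y [].
split; [split|].
- move=> S [T [TT [[TZ [H0 [hb0 rel]]] ->]]].
  have eH := bdry_eq cp hb hb0; rewrite -eH in rel.
  split => //.
  apply: (poly_restrict HsubM (proj1 (hTt T TT))).
  by case: rel => y [_ [Sy _]]; exists y.
- move=> S S' [T [TT [[TZ _] ->]]] [T' [TT' [[T'Z _] ->]]] neq.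
  apply/seteqP; split => // x [r1 r2].
  have neqT : T <> T' by move=> e; apply: neq; rewrite e.
  have [[pT [z rz]] [pT' [z' rz']]] := (hTt T TT, hTt T' TT').
  have [C cT] := polyhedron_cone pT.
  have [C' cT'] := polyhedron_cone pT'.
  have [q [q1 q2]] := core cp HE HM ZE cT cT' TZ T'Z rz rz' r1 r2.
  by have := hdisj T T' TT TT' neqT; move/seteqP => [+ _] => /(_ q (conj q1 q2)).
- move=> K KH cK.
  have KM : K `<=` M by move=> y /KH /HsubM.
  apply: sub_finite_set (finite_image (fun T => T `&` H) (hfin K KM cK)).
  move=> S [[T [TT [_ ->]]] [y [[Ty Hy] Ky]]].
  by exists T => //; split => //; exists y.
Qed.
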